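(* Let $H=\langle a,b,c\mid ac=ca,\ bc=cb,\ [a,b]=c\rangle$ be the integral Heisenberg group, identified with the group of matrices $\begin{bmatrix}1&x&z\\ &1&y\\ &&1\end{bmatrix}$ with $x,y,z\in\mathbb{Z}$, and let $S=\{a,b,a^{-1},b^{-1}\}$ be the generating set. For any $g=\begin{bmatrix}1&x&z\\ &1&y\\ &&1\end{bmatrix}\in H$, the stable word length with respect to $S$ is \[ \mathrm{swl}_S(g)=\lim_{n\to\infty}\frac{|g^n|_S}{n}=|x|+|y|. \]
   Context: Here $|g|_S$ denotes the word length of $g$ with respect to $S$. The proof uses Blachère's formula for word lengths in the Heisenberg group: writing $d(x,y,z)$ for the word length of the matrix with entries $x,y,z$, one has $d(x,y,z)=d(-x,y,-z)=d(x,-y,-z)=d(-x,-y,z)=d(y,x,z)$, and for $z\ge 0$, $x\ge 0$, $x\ge y\ge -x$: if $y\ge 0$, $x\le\sqrt z$ then $d(x,y,z)=2\lceil 2\sqrt z\rceil-x-y$; if $y\ge 0$, $x\ge\sqrt z$ and $xy>z$ then $d(x,y,z)=x+y$. *)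

(* Defs.v *)
From HB Require Import structures.
From mathcomp Require Import all_boot all_order all_algebra zify ring.
From mathcomp Require Import all_classical all_reals all_analysis.
Set Implicit Arguments. Unset Strict Implicit. Unset Printing Implicit Defensive.
Import Order.TTheory GRing.Theory Num.Theory.
Local Open Scope ring_scope.

(** The integral Heisenberg group, identified with the upper unitriangular
    integer matrices [[1,x,z],[0,1,y],[0,0,1]], encoded as the triple (x,y,z).
    Matrix multiplication gives
    (x,y,z)(x',y',z') = (x+x', y+y', z+z'+x*y'). *)
Definition heis := (int * int * int)%type.
Definition hx (g : heis) : int := g.1.1.
Definition hy (g : heis) : int := g.1.2.
Definition hz (g : heis) : int := g.2.
Definition hmul (g h : heis) : heis :=
  (hx g + hx h, hy g + hy h, hz g + hz h + hx g * hy h).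
Definition hone : heis := (0, 0, 0).
Definition hpow (g : heis) (n : nat) : heis := iter n (hmul g) hone.

(** The generating set S = {a, a^-1, b, b^-1}, indexed by 'I_4:
    0 |-> a, 1 |-> a^-1, 2 |-> b, 3 |-> b^-1, where
    a = (1,0,0) (x = 1) and b = (0,1,0) (y = 1). *)
Definition gen (i : 'I_4) : heis :=
  match val i with
  | 0 => (1, 0, 0)
  | 1 => (-1, 0, 0)
  | 2 => (0, 1, 0)
  | _ => (0, -1, 0)
  end.

Definition eval_word (w : seq 'I_4) : heis :=
  foldl (fun g i => hmul g (gen i)) hone w.

Definition has_word_of_length (g : heis) (n : nat) : bool :=
  [exists t : n.-tuple 'I_4, eval_word t == g].

Definition reach (g : heis) := exists w, eval_word w = g.

Lemma reach_step g i : reach g -> reach (hmul g (gen i)).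
Proof. by case=> w <-; exists (rcons w i); rewrite /eval_word foldl_rcons. Qed.

Lemma reach_eq g h : g = h -> reach g -> reach h.
Proof. by move=> ->. Qed.

Lemma int_ind2 (P : int -> Prop) : P 0 -> (forall z, P z -> P (z + 1)) ->
  (forall z, P z -> P (z - 1)) -> forall z, P z.
Proof.
move=> P0 Pp Pm; case=> n; elim: n => [|n IH] //.
- have -> : Posz n.+1 = Posz n + 1 by lia.
  exact: Pp.
- have -> : Negz 0 = 0 - 1 by [].
  exact: Pm.
- have -> : Negz n.+1 = Negz n - 1 by rewrite !NegzE; lia.
  exact: Pm.
Qed.

Definition o0 : 'I_4 := @Ordinal 4 0 isT.
Definition o1 : 'I_4 := @Ordinal 4 1 isT.
Definition o2 : 'I_4 := @Ordinal 4 2 isT.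
Definition o3 : 'I_4 := @Ordinal 4 3 isT.

Lemma all_reach g : reach g.
Proof.
have zP : forall x y z, reach (x, y, z) -> reach (x, y, z + 1) /\ reach (x, y, z - 1).
  move=> x y z H; split.
  - move: (reach_step o0 H) => /(reach_step o2) /(reach_step o1) /(reach_step o3).
    by apply: reach_eq; rewrite /hmul /gen /hx /hy /hz /=; congr (_, _, _); ring.
  - move: (reach_step o2 H) => /(reach_step o0) /(reach_step o3) /(reach_step o1).
    by apply: reach_eq; rewrite /hmul /gen /hx /hy /hz /=; congr (_, _, _); ring.
have h0 : forall z, reach (0, 0, z).
  apply: int_ind2; first by exists [::].
  - by move=> z /zP [].
  - by move=> z /zP [].
have h1 : forall x z, reach (x, 0, z).
  move=> x z; elim/int_ind2: x => [|x H|x H]; first exact: h0.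
  - move: (reach_step o0 H); apply: reach_eq.
    by rewrite /hmul /gen /hx /hy /hz /=; congr (_, _, _); ring.
  - move: (reach_step o1 H); apply: reach_eq.
    by rewrite /hmul /gen /hx /hy /hz /=; congr (_, _, _); ring.
case: g => [[x y] z].
elim/int_ind2: y z => [|y IH|y IH] z; first exact: h1.
- move: (reach_step o2 (IH (z - x))); apply: reach_eq.
  by rewrite /hmul /gen /hx /hy /hz /=; congr (_, _, _); ring.
- move: (reach_step o3 (IH (z + x))); apply: reach_eq.
  by rewrite /hmul /gen /hx /hy /hz /=; congr (_, _, _); ring.
Qed.

Lemma generated (g : heis) : exists n, has_word_of_length g n.
Proof.
case: (all_reach g) => w Hw; exists (size w).
by apply/existsP; exists (in_tuple w); rewrite Hw.
Qed.

Definition word_length (g : heis) : nat := ex_minn (generated g).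

(* Main.v *)
Require Import Defs.
From HB Require Import structures.
From mathcomp Require Import all_boot all_order all_algebra zify ring lra.
From mathcomp Require Import all_classical all_reals all_analysis.
Import Order.TTheory GRing.Theory Num.Theory numFieldNormedType.Exports.
Local Open Scope classical_set_scope.
Local Open Scope ring_scope.

Lemma hmulA a b c : hmul a (hmul b c) = hmul (hmul a b) c.
Proof.
case: a => [[a1 a2] a3]; case: b => [[b1 b2] b3]; case: c => [[c1 c2] c3].
rewrite /hmul /hx /hy /hz /=; congr (_, _, _); ring.
Qed.

Lemma hone_mul a : hmul hone a = a.
Proof.
case: a => [[a1 a2] a3]; rewrite /hmul /hx /hy /hz /=; congr (_, _, _); ring.
Qed.

Lemma foldl_gen g w :
  foldl (fun g i => hmul g (gen i)) g w = hmul g (eval_word w).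
Proof.
rewrite /eval_word; elim: w g => [|i w IH] g /=.
  by case: g => [[a1 a2] a3]; rewrite /hmul /hx /hy /hz /=; congr (_, _, _); ring.
by rewrite IH (IH (hmul hone (gen i))) hone_mul hmulA.
Qed.

Lemma eval_cat w1 w2 : eval_word (w1 ++ w2) = hmul (eval_word w1) (eval_word w2).
Proof. by rewrite {1}/eval_word foldl_cat foldl_gen. Qed.

Lemma eval_cons i w : eval_word (i :: w) = hmul (gen i) (eval_word w).
Proof. by rewrite -cat1s eval_cat /eval_word /= hone_mul. Qed.

Lemma eval_nil : eval_word [::] = hone.
Proof. by []. Qed.

Lemma eval_nseq m i :
  eval_word (nseq m i) = ((m%:Z * hx (gen i)), (m%:Z * hy (gen i)), 0).
Proof.
elim: m => [|m IH]; first by rewrite /eval_word /hone /=; congr (_,_,_); ring.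
rewrite /= eval_cons IH /hmul /hx /hy /hz /=.
have h0 : (gen i).1.1 * (gen i).1.2 = 0.
  by case: (i) => -[|[|[|[|k]]]] //=.
congr (_,_,_); rewrite ?PoszD; try ring.
have h2 : (gen i).2 = 0 by case: (i) => -[|[|[|[|k]]]].
by rewrite h2 mulrCA h0; ring.
Qed.

Lemma eval_flatten w m :
  eval_word (flatten (nseq m w)) = hpow (eval_word w) m.
Proof.
elim: m => [|m IH] //=.
by rewrite eval_cat IH.
Qed.

Lemma hpow_closed x y z (m : nat) :
  hpow (x, y, z) m = (m%:Z * x, m%:Z * y, m%:Z * z + x * y * ('C(m, 2))%:Z).
Proof.
elim: m => [|m IH]; first by rewrite /hpow /hone /= !mul0r mulr0 addr0.
rewrite /hpow iterS -/(hpow _ _) IH /hmul /hx /hy /hz /=.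
rewrite binS bin1 !PoszD; rewrite intS; congr (_,_,_); ring.
Qed.

Lemma wl_le g w : eval_word w = g -> (word_length g <= size w)%N.
Proof.
move=> H; rewrite /word_length; case: ex_minnP => m _ Hm; apply: Hm.
by apply/existsP; exists (in_tuple w); rewrite H.
Qed.

Lemma wl_word g : exists w, eval_word w = g /\ size w = word_length g.
Proof.
rewrite /word_length; case: ex_minnP => m /existsP [t /eqP Ht] _.
by exists t; rewrite size_tuple.
Qed.

Lemma lower w : `|hx (eval_word w)| + `|hy (eval_word w)| <= (size w)%:Z.
Proof.
elim/last_ind: w => [|w i IH]; first by rewrite /eval_word /= /hx /hy.
rewrite -cats1 eval_cat size_cat /= PoszD /hmul /hx /hy /=.
rewrite /eval_word /= /hmul /hone /hx /hy /=.
move: IH; rewrite /hx /hy.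
case: i => -[|[|[|[|k]]]] //= _; rewrite /gen /=;
  set u := _.1.1; set v := _.1.2; move=> IH;
  rewrite ?addr0 ?add0r; lia.
Qed.

Lemma gen0 : gen o0 = (1,0,0). Proof. by []. Qed.
Lemma gen1 : gen o1 = (-1,0,0). Proof. by []. Qed.
Lemma gen2 : gen o2 = (0,1,0). Proof. by []. Qed.
Lemma gen3 : gen o3 = (0,-1,0). Proof. by []. Qed.

Lemma word_h x y : exists w, eval_word w = (x, y, x * y) /\
  size w = (`|x| + `|y|)%N.
Proof.
exists (nseq `|x|%N (if (0 <= x) then o0 else o1) ++
        nseq `|y|%N (if (0 <= y) then o2 else o3)).
rewrite eval_cat !eval_nseq size_cat !size_nseq; split => //.
rewrite /hmul /hx /hy /hz /=.
have ex : `|x|%N%:Z * (gen (if 0 <= x then o0 else o1)).1.1 = x.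
  by case: (leP 0 x) => h /=; lia.
have ey : `|y|%N%:Z * (gen (if 0 <= y then o2 else o3)).1.2 = y.
  by case: (leP 0 y) => h /=; lia.
have ex2 : (gen (if 0 <= x then o0 else o1)).1.2 = 0 by case: (0 <= x).
have ey2 : (gen (if 0 <= y then o2 else o3)).1.1 = 0 by case: (0 <= y).
rewrite ex ey ex2 ey2 !mulr0 !addr0 add0r; congr (_,_,_).
by rewrite -ey -ex; ring.
Qed.

Lemma word_c (k : int) (p : nat) : exists w, eval_word w = (0, 0, k) /\
  (size w <= 2 * p + 2 * (`|k|%N %/ p) + 4 * (`|k|%N %% p))%N.
Proof.
set K := `|k|%N; set q := (K %/ p)%N; set r := (K %% p)%N.
have HK : K = (q * p + r)%N by rewrite /q /r -divn_eq.
have Ec : forall (w : seq 'I_4) c, eval_word w = (0,0,c) ->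
   eval_word (flatten (nseq r w)) = (0, 0, r%:Z * c).
  move=> w c Hw; rewrite eval_flatten Hw hpow_closed; congr (_,_,_);
  by rewrite ?mulr0 ?mul0r ?mulr1 ?addr0.
case: (leP 0 k) => hk.
  exists (nseq p o0 ++ nseq q o2 ++ nseq p o1 ++ nseq q o3 ++
          flatten (nseq r [:: o0; o2; o1; o3])).
  rewrite !eval_cat !eval_nseq (Ec _ 1); last by [].
  rewrite !size_cat !size_nseq size_flatten /shape map_nseq sumn_nseq /=.
  split; last by lia.
  rewrite !gen0 !gen1 !gen2 !gen3 /hmul /hx /hy /hz /=.
  have -> : k = K%:Z by rewrite /K; lia.
  rewrite HK; congr (_,_,_); rewrite ?PoszD ?PoszM; ring.
exists (nseq p o1 ++ nseq q o2 ++ nseq p o0 ++ nseq q o3 ++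
        flatten (nseq r [:: o1; o2; o0; o3])).
rewrite !eval_cat !eval_nseq.
rewrite (Ec _ (-1)); last by [].
rewrite !size_cat !size_nseq size_flatten /shape map_nseq sumn_nseq /=.
split; last by lia.
rewrite !gen0 !gen1 !gen2 !gen3 /hmul /hx /hy /hz /=.
have -> : k = - K%:Z by rewrite /K; lia.
rewrite HK; congr (_,_,_); rewrite ?PoszD ?PoszM; ring.
Qed.

Lemma upper x y z (n p : nat) :
  (word_length (hpow (x, y, z) n) <= n * (absz x + absz y) + 2 * p
     + 2 * ((n * absz (z - x * y)%R) %/ p) + 4 * ((n * absz (z - x * y)%R) %% p))%N.
Proof.
case: (word_h x y) => wh [Eh Sh].
case: (word_c (n%:Z * (z - x * y)) p) => wc [Ec Sc].
have -> : (n * absz (z - x * y)%R)%N = absz (n%:Z * (z - x * y)) by rewrite abszM.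
apply: leq_trans (@wl_le _ (flatten (nseq n wh) ++ wc) _) _.
  rewrite eval_cat eval_flatten Eh Ec !hpow_closed /hmul /hx /hy /hz /=.
  congr (_,_,_); ring.
rewrite size_cat size_flatten /shape map_nseq sumn_nseq Sh; lia.
Qed.

Lemma lower_pow x y z (n : nat) :
  (n * (absz x + absz y) <= word_length (hpow (x, y, z) n))%N.
Proof.
case: (wl_word (hpow (x, y, z) n)) => w [Ew Sw].
have H := lower w; rewrite Ew hpow_closed /hx /hy /= Sw in H.
rewrite !normrM in H.
have e1 : `|x| = (absz x)%:Z by rewrite abszE.
have e2 : `|y| = (absz y)%:Z by rewrite abszE.
have e3 : `|n%:Z| = n%:Z by [].
rewrite e1 e2 e3 in H; lia.
Qed.

Lemma nat_bound (M D L n wl : nat) :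
  (0 < M)%N ->
  (wl <= n * L + 2 * (4 * M * D + 1) + 2 * ((n * D) %/ (4 * M * D + 1))
      + 4 * ((n * D) %% (4 * M * D + 1)))%N ->
  (12 * M * (4 * M * D + 1) + 1 <= n)%N ->
  (M * wl < M * (n * L) + n)%N.
Proof.
set p := (4 * M * D + 1)%N => M0 Hw Hn.
set q := ((n * D) %/ p)%N; set r := ((n * D) %% p)%N.
have rp : (r < p)%N by rewrite /r ltn_mod /p addn1.
have qp : (q * p <= n * D)%N by rewrite /q leq_trunc_div.
have p0 : (0 < p)%N by rewrite /p addn1.
have q4 : (4 * M * q < n)%N.
  rewrite -(ltn_pmul2r p0).
  have H1 : (4 * M * q * p <= 4 * M * (n * D))%N.
    by rewrite -mulnA; apply: leq_mul (leqnn _) qp.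
  have H2 : (4 * M * (n * D) < n * p)%N by rewrite /p; nia.
  exact: leq_ltn_trans H1 H2.
have Mr : (M * r <= M * p)%N by rewrite leq_mul2l ltnW ?rp ?orbT.
nia.
Qed.

Lemma main_real (R : realType) (M L wl n : nat) (e : R) :
  (0 < n)%N -> (n * L <= wl)%N -> (M * wl < M * (n * L) + n)%N ->
  1 < M%:R * e -> `|L%:R - wl%:R / n%:R| < e.
Proof.
move=> n0 Hl Hu Me.
have n0' : (0 : R) < n%:R by rewrite ltr0n.
have Hl' : (n%:R * L%:R : R) <= wl%:R by rewrite -natrM ler_nat.
have Hu' : (M%:R * wl%:R : R) < M%:R * (n%:R * L%:R) + n%:R.
  by rewrite -!natrM -natrD ltr_nat.
have M0 : (0 : R) <= M%:R by rewrite ler0n.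
rewrite ltr_distl; apply/andP; split.
  rewrite ltrBlDr ltr_pdivrMr //.
  nra.
have e0 : 0 < e by nra.
have h : (L%:R : R) <= wl%:R / n%:R by rewrite ler_pdivlMr // mulrC.
lra.
Qed.

Theorem corollary23 (R : realType) (x y z : int) :
  (fun n : nat => ((word_length (hpow (x, y, z) n))%:R / n%:R : R))
    @ \oo --> ((`|x| + `|y|)%:~R : R).
Proof.
set L := (absz x + absz y)%N; set D := absz (z - x * y)%R.
have -> : ((`|x| + `|y|)%:~R : R) = L%:R.
  have e1 : `|x| = (absz x)%:Z by rewrite abszE.
  have e2 : `|y| = (absz y)%:Z by rewrite abszE.
  by rewrite e1 e2 -PoszD.
apply/cvgrPdist_lt => e e0.
set M := (Num.Def.trunc (e^-1)).+1.
have Me : 1 < M%:R * e.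
  have := truncnS_gt (e^-1); rewrite -/M => h.
  by rewrite -ltr_pdivrMr // div1r.
near=> n.
have Hn : (12 * M * (4 * M * D + 1) + 1 <= n)%N.
  by near: n; exact: nbhs_infty_ge.
apply: (@main_real R M) => //.
- lia.
- exact: lower_pow.
- apply: (@nat_bound M D) => //.
  exact: upper.
Unshelve. all: by end_near.
Qed.
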